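(* Let $G$ be a finite saturable graph with diameter at most $2$. Then $G$ is supersaturable.
   Context: For a simple graph $G$ and a positive integer $k$, a proper $k$-total difference labeling (TDL) of $G$ is a function $f: V(G)\to\{1,\dots,k\}$, extended to edges by $f(\{u,v\}) = |f(u)-f(v)|$, such that: (i) adjacent vertices receive different labels; (ii) two distinct edges sharing a vertex receive different labels; (iii) no edge receives the same label as either of its endpoints. $\chi_{td}(G)$ denotes the smallest $k$ for which such a labeling exists. A TDL of a graph $G$ of order $n$ is saturated if $\chi_{td}(G)=n$ and the set of vertex labels used is exactly $\{1,2,\dots,\chi_{td}(G)\}$. $G$ is saturable if it has at least one saturated labeling, and supersaturable if every proper $\chi_{td}(G)$-total difference labeling of $G$ is saturated. *)

(* Defs.v *)
From mathcomp Require Import all_boot.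
Set Implicit Arguments. Unset Strict Implicit. Unset Printing Implicit Defensive.

Definition simple_graph (T : finType) (e : rel T) : Prop :=
  symmetric e /\ irreflexive e.

Definition absdiff (a b : nat) : nat := (a - b) + (b - a).

Definition is_TDL (T : finType) (e : rel T) (k : nat) (f : T -> nat) : Prop :=
  [/\ (forall x, 1 <= f x <= k),
      (forall u v, e u v -> f u != f v),
      (forall u v w, e u v -> e u w -> v != w ->
                     absdiff (f u) (f v) != absdiff (f u) (f w))
    & (forall u v, e u v ->
         (absdiff (f u) (f v) != f u) && (absdiff (f u) (f v) != f v))].

Definition is_chi_td (T : finType) (e : rel T) (k : nat) : Prop :=
  [/\ 0 < k, (exists f, is_TDL e k f)
    & (forall k', 0 < k' < k -> forall f, ~ is_TDL e k' f)].

Definition saturated (T : finType) (e : rel T) (f : T -> nat) : Prop :=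
  is_chi_td e #|T| /\
  (forall i, (exists x, f x = i) <-> 1 <= i <= #|T|).

Definition saturable (T : finType) (e : rel T) : Prop :=
  exists f, is_TDL e #|T| f /\ saturated e f.

Definition supersaturable (T : finType) (e : rel T) : Prop :=
  forall k, is_chi_td e k -> forall f, is_TDL e k f -> saturated e f.

Definition diam_le2 (T : finType) (e : rel T) : Prop :=
  forall u v, u != v -> e u v \/ exists w, e u w /\ e w v.

(* Main.v *)
Require Import Defs.
From mathcomp Require Import all_boot.

Lemma chi_uniq {T : finType} {e : rel T} {k1 k2} :
  is_chi_td e k1 -> is_chi_td e k2 -> k1 = k2.
Proof.
move=> [p1 [f1 h1] m1] [p2 [f2 h2] m2].
case: (ltngtP k1 k2) => // H.
- by case: (m2 k1 _ f1); rewrite ?p1.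
- by case: (m1 k2 _ f2); rewrite ?p2.
Qed.

Theorem mainTheorem12 (T : finType) (e : rel T) :
  simple_graph e -> diam_le2 e -> saturable e -> supersaturable e.
Proof.
move=> [esym eirr] diam [g [_ [chin _]]] k chik f tdl.
have kn := chi_uniq chik chin; subst k.
split => // i.
case: tdl => rng adj inc _.
have finj : injective f.
  move=> x y fxy; case: (eqVneq x y) => // nxy.
  case: (diam x y nxy) => [exy | [w [exw ewy]]].
    by move: (adj x y exy); rewrite fxy eqxx.
  rewrite esym in exw.
  by move: (inc w x y exw ewy nxy); rewrite fxy eqxx.
split; first by move=> [x <-]; exact: rng.
move=> hi.
set s := [seq f x | x <- enum T].
have us : uniq s by rewrite map_inj_uniq ?enum_uniq.
have sub : {subset s <= iota 1 #|T|}.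
  move=> j /mapP [x _ ->]; rewrite mem_iota; case/andP: (rng x) => a b.
  by rewrite a /= addnC addn1 ltnS.
have sz : size (iota 1 #|T|) <= size s by rewrite size_map -cardE size_iota.
have [_ eqs] := uniq_min_size us sub sz.
have : i \in s.
  rewrite (eqs i) mem_iota; case/andP: hi => a b.
  by rewrite a /= addnC addn1 ltnS.
by move/mapP => [x _ ->]; exists x.
Qed.
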